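(* Let $f$ be an entire function of finite order and let $n(r)$ denote the number of zeros of $f$ (counted with multiplicity) in the closed disk $\{|z|\le r\}$. Suppose there exist $r_0>0$ and $K>1$ such that $n(2r)\le K\,n(r)$ for all $r\ge r_0$. For $\mu>0$ let $F_\mu$ be the set of all $r\ge r_0$ such that \[ n(t)\le \left(\tfrac{t}{r}\right)^{\mu} n(r)\ \text{ for all } t\ge r \qquad\text{and}\qquad n(t)\ge \left(\tfrac{t}{r}\right)^{\mu} n(r)\ \text{ for all } r_0\le t\le r . \] Then for every $\delta>0$ there exists $\mu>0$ such that $\operatorname{meas}\bigl(F_\mu\cap[R,2R]\bigr)\ge (1-\delta)R$ for all $R\ge 2r_0$.
   Context: $\operatorname{meas}$ denotes one-dimensional Lebesgue measure on $\mathbb R$. *)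

(* Defs.v *)
From Stdlib Require Import Reals Lra List.
Open Scope R_scope.

Definition Cx : Type := (R * R)%type.
Definition C0 : Cx := (0, 0).
Definition C1 : Cx := (1, 0).
Definition Cadd (z w : Cx) : Cx := (fst z + fst w, snd z + snd w).
Definition Csub (z w : Cx) : Cx := (fst z - fst w, snd z - snd w).
Definition Cmul (z w : Cx) : Cx :=
  (fst z * fst w - snd z * snd w, fst z * snd w + snd z * fst w).
Fixpoint Cpow (z : Cx) (m : nat) : Cx :=
  match m with O => C1 | S k => Cmul z (Cpow z k) end.
Definition Cnorm (z : Cx) : R := sqrt (fst z ^ 2 + snd z ^ 2).

Definition Cdifferentiable (f : Cx -> Cx) (z : Cx) : Prop :=
  exists l : Cx, forall eps, 0 < eps -> exists d, 0 < d /\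
    forall h : Cx, 0 < Cnorm h < d ->
      Cnorm (Csub (Csub (f (Cadd z h)) (f z)) (Cmul l h)) <= eps * Cnorm h.

Definition entire (f : Cx -> Cx) : Prop := forall z, Cdifferentiable f z.

(* finite order: log log M(r) / log r bounded, i.e. |f z| <= exp(|z|^rho) for large |z| *)
Definition finite_order (f : Cx -> Cx) : Prop :=
  exists rho R0, 0 < rho /\ forall z, R0 <= Cnorm z ->
    Cnorm (f z) <= exp (Rpower (Cnorm z) rho).

Definition zero_mult (f : Cx -> Cx) (a : Cx) (m : nat) : Prop :=
  (1 <= m)%nat /\ exists g : Cx -> Cx, entire g /\ g a <> C0 /\
    forall z, f z = Cmul (Cpow (Csub z a) m) (g z).

Fixpoint sum_mult (l : list (Cx * nat)) : nat :=
  match l with nil => O | cons p l' => (snd p + sum_mult l')%nat end.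

Definition zero_counting (f : Cx -> Cx) (n : R -> R) : Prop :=
  forall r, 0 <= r -> exists l : list (Cx * nat),
    NoDup (map fst l) /\
    (forall z, (f z = C0 /\ Cnorm z <= r) <-> In z (map fst l)) /\
    (forall p, In p l -> zero_mult f (fst p) (snd p)) /\
    n r = INR (sum_mult l).

(* Lebesgue outer measure of E is >= c: every countable cover of E by closed
   intervals [a k, b k] has total length >= c. *)
Definition meas_ge (E : R -> Prop) (c : R) : Prop :=
  forall a b : nat -> R,
    (forall k, a k <= b k) ->
    (forall x, E x -> exists k, a k <= x <= b k) ->
    forall L, infinite_sum (fun k => b k - a k) L -> c <= L.

Definition F_set (n : R -> R) (r0 mu : R) (r : R) : Prop :=
  r0 <= r /\
  (forall t, r <= t -> n t <= Rpower (t / r) mu * n r) /\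
  (forall t, r0 <= t <= r -> Rpower (t / r) mu * n r <= n t).

(* Main.v *)
Require Import Defs.
From Stdlib Require Import Reals Lra Lia List Arith ZArith Classical ClassicalEpsilon.
Open Scope R_scope.

Lemma Cpow_real (s : R) (m : nat) : Cpow (s, 0) m = (s ^ m, 0).
Proof.
  induction m as [|m IH]; simpl; [reflexivity|].
  rewrite IH; unfold Cmul; simpl; f_equal; ring.
Qed.

Lemma Csub_shift (a : Cx) (s : R) : Csub (Cadd a (s, 0)) a = (s, 0).
Proof. destruct a; unfold Csub, Cadd; simpl; f_equal; ring. Qed.

Lemma Cnorm_real (s : R) : 0 <= s -> Cnorm (s, 0) = s.
Proof.
  intros Hs; unfold Cnorm; simpl.
  replace (s * (s * 1) + 0 * (0 * 1)) with (s * s) by ring.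
  apply sqrt_square; lra.
Qed.

Lemma Cnorm_fst (z : Cx) : Rabs (fst z) <= Cnorm z.
Proof.
  unfold Cnorm. rewrite <- sqrt_Rsqr_abs. apply sqrt_le_1_alt.
  unfold Rsqr; simpl. nra.
Qed.

Lemma Cnorm_snd (z : Cx) : Rabs (snd z) <= Cnorm z.
Proof.
  unfold Cnorm. rewrite <- sqrt_Rsqr_abs. apply sqrt_le_1_alt.
  unfold Rsqr; simpl. nra.
Qed.

Lemma diff_real (g : Cx -> Cx) (a : Cx) : Cdifferentiable g a ->
  exists C d, 0 < d /\ 0 <= C /\ forall s, 0 < s < d ->
    Rabs (fst (g (Cadd a (s,0))) - fst (g a)) <= C * s /\
    Rabs (snd (g (Cadd a (s,0))) - snd (g a)) <= C * s.
Proof.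
  intros [l Hl]. destruct (Hl 1 ltac:(lra)) as [d [Hd H]].
  exists (Rabs (fst l) + Rabs (snd l) + 1), d. split; [lra|]. split.
  { pose proof (Rabs_pos (fst l)); pose proof (Rabs_pos (snd l)); lra. }
  intros s Hs. assert (Hn : Cnorm (s,0) = s) by (apply Cnorm_real; lra).
  assert (H1 : 0 < Cnorm (s, 0) < d) by lra.
  specialize (H _ H1). rewrite Hn in H.
  pose proof (Cnorm_fst (Csub (Csub (g (Cadd a (s, 0))) (g a)) (Cmul l (s, 0)))) as F.
  pose proof (Cnorm_snd (Csub (Csub (g (Cadd a (s, 0))) (g a)) (Cmul l (s, 0)))) as S.
  set (NN := Cnorm _) in F, S, H.
  unfold Csub, Cmul in F, S; simpl in F, S.
  set (u := fst (g (Cadd a (s,0)))) in *. set (v := snd (g (Cadd a (s,0)))) in *.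
  pose proof (Rabs_pos (fst l)); pose proof (Rabs_pos (snd l)).
  assert (Rabs (fst l * s) = Rabs (fst l) * s) by (rewrite Rabs_mult, (Rabs_right s); lra).
  assert (Rabs (snd l * s) = Rabs (snd l) * s) by (rewrite Rabs_mult, (Rabs_right s); lra).
  split.
  - replace (u - fst (g a)) with ((u - fst (g a) - (fst l * s - snd l * 0)) + fst l * s) by ring.
    eapply Rle_trans; [apply Rabs_triang|]. nra.
  - replace (v - snd (g a)) with ((v - snd (g a) - (fst l * 0 + snd l * s)) + snd l * s) by ring.
    eapply Rle_trans; [apply Rabs_triang|]. nra.
Qed.

Lemma small_zero (x C d : R) : 0 < d -> 0 <= C -> (forall s, 0 < s < d -> Rabs x <= C * s) -> x = 0.
Proof.
  intros Hd HC H. destruct (Req_dec x 0) as [|Hx]; auto. exfalso.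
  assert (Ha : 0 < Rabs x) by (apply Rabs_pos_lt; auto).
  set (s := Rmin (d/2) (Rabs x / (2 * (C + 1)))).
  assert (Hs1 : s <= d/2) by apply Rmin_l.
  assert (Hs2 : s <= Rabs x / (2 * (C + 1))) by apply Rmin_r.
  assert (Hs0 : 0 < s).
  { unfold s; apply Rmin_pos; [lra|]. apply Rdiv_lt_0_compat; lra. }
  specialize (H s ltac:(lra)).
  assert (C * s <= (C+1) * s) by nra.
  assert ((C+1) * s <= Rabs x / 2).
  { apply Rmult_le_compat_l with (r := C+1) in Hs2; [|lra].
    replace ((C + 1) * (Rabs x / (2 * (C + 1)))) with (Rabs x / 2) in Hs2 by (field; lra). lra. }
  lra.
Qed.

Lemma mult_le (f : Cx -> Cx) (a : Cx) (m1 m2 : nat) :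
  zero_mult f a m1 -> zero_mult f a m2 -> (m1 <= m2)%nat.
Proof.
  intros [H1 [g1 [E1 [N1 F1]]]] [H2 [g2 [E2 [N2 F2]]]].
  destruct (le_lt_dec m1 m2) as [|Hlt]; auto. exfalso.
  destruct (diff_real g1 a (E1 a)) as [C1 [d1 [Hd1 [HC1 B1]]]].
  destruct (diff_real g2 a (E2 a)) as [C2 [d2 [Hd2 [HC2 B2]]]].
  set (k := (m1 - m2)%nat).
  assert (Hk : (1 <= k)%nat) by (unfold k; lia).
  assert (Hm : m1 = (k + m2)%nat) by (unfold k; lia).
  set (d := Rmin 1 (Rmin d1 d2)).
  assert (Hd : 0 < d) by (unfold d; repeat apply Rmin_pos; lra).
  assert (Hdd : d <= 1 /\ d <= d1 /\ d <= d2).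
  { unfold d; split; [apply Rmin_l|]. split.
    - eapply Rle_trans; [apply Rmin_r|apply Rmin_l].
    - eapply Rle_trans; [apply Rmin_r|apply Rmin_r]. }
  assert (Rel : forall s, 0 < s -> fst (g2 (Cadd a (s,0))) = s ^ k * fst (g1 (Cadd a (s,0))) /\
                               snd (g2 (Cadd a (s,0))) = s ^ k * snd (g1 (Cadd a (s,0)))).
  { intros s Hs. pose proof (F1 (Cadd a (s,0))) as G1. rewrite (F2 (Cadd a (s,0))) in G1.
    rewrite Csub_shift, !Cpow_real in G1. unfold Cmul in G1; simpl in G1.
    injection G1; intros Ha Hb.
    assert (Hp : 0 < s ^ m2) by (apply pow_lt; lra).
    rewrite Hm, pow_add in Ha, Hb. split.
    - apply Rmult_eq_reg_l with (s ^ m2); [|lra]. nra.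
    - apply Rmult_eq_reg_l with (s ^ m2); [|lra]. nra. }
  apply N2. destruct (g2 a) as [u v] eqn:Eg. unfold C0.
  assert (Hpow : forall s, 0 < s <= 1 -> s ^ k <= s).
  { intros s Hs. replace k with (S (k - 1)) by lia. simpl.
    assert (s ^ (k-1) <= 1) by (rewrite <- (pow1 (k-1)); apply pow_incr; lra). nra. }
  assert (Key : forall s, 0 < s < d -> Rabs u <= (Rabs (fst (g1 a)) + C1 + C2) * s /\
                                    Rabs v <= (Rabs (snd (g1 a)) + C1 + C2) * s).
  { intros s Hs. destruct (Rel s ltac:(lra)) as [R1 R2].
    destruct (B1 s ltac:(lra)) as [P1 Q1]. destruct (B2 s ltac:(lra)) as [P2 Q2].
    simpl in P2, Q2. rewrite R1 in P2. rewrite R2 in Q2.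
    pose proof (Hpow s ltac:(lra)) as Hps. assert (0 < s ^ k) by (apply pow_lt; lra).
    set (w1 := fst (g1 (Cadd a (s,0)))) in *. set (w2 := snd (g1 (Cadd a (s,0)))) in *.
    assert (Rabs w1 <= Rabs (fst (g1 a)) + C1 * s).
    { replace w1 with ((w1 - fst (g1 a)) + fst (g1 a)) by ring.
      eapply Rle_trans; [apply Rabs_triang|]. lra. }
    assert (Rabs w2 <= Rabs (snd (g1 a)) + C1 * s).
    { replace w2 with ((w2 - snd (g1 a)) + snd (g1 a)) by ring.
      eapply Rle_trans; [apply Rabs_triang|]. lra. }
    assert (Rabs (s^k * w1) <= s * (Rabs (fst (g1 a)) + C1)).
    { rewrite Rabs_mult, (Rabs_right (s^k)) by lra.
      pose proof (Rabs_pos w1). pose proof (Rabs_pos (fst (g1 a))).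
      apply Rle_trans with (s^k * (Rabs (fst (g1 a)) + C1 * s)); [apply Rmult_le_compat_l; lra|].
      apply Rle_trans with (s * (Rabs (fst (g1 a)) + C1 * s)); [apply Rmult_le_compat_r; nra|].
      apply Rmult_le_compat_l; nra. }
    assert (Rabs (s^k * w2) <= s * (Rabs (snd (g1 a)) + C1)).
    { rewrite Rabs_mult, (Rabs_right (s^k)) by lra.
      pose proof (Rabs_pos w2). pose proof (Rabs_pos (snd (g1 a))).
      apply Rle_trans with (s^k * (Rabs (snd (g1 a)) + C1 * s)); [apply Rmult_le_compat_l; lra|].
      apply Rle_trans with (s * (Rabs (snd (g1 a)) + C1 * s)); [apply Rmult_le_compat_r; nra|].
      apply Rmult_le_compat_l; nra. }
    split.
    - replace u with (s^k * w1 - (s^k*w1 - u)) by ring.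
      eapply Rle_trans; [apply Rabs_triang|]. rewrite Rabs_Ropp. nra.
    - replace v with (s^k * w2 - (s^k*w2 - v)) by ring.
      eapply Rle_trans; [apply Rabs_triang|]. rewrite Rabs_Ropp. nra. }
  pose proof (Rabs_pos (fst (g1 a))); pose proof (Rabs_pos (snd (g1 a))).
  f_equal.
  - apply (small_zero u (Rabs (fst (g1 a)) + C1 + C2) d); [lra|lra|]. intros s Hs; apply (Key s Hs).
  - apply (small_zero v (Rabs (snd (g1 a)) + C1 + C2) d); [lra|lra|]. intros s Hs; apply (Key s Hs).
Qed.

Lemma sum_mult_app (l1 l2 : list (Cx * nat)) : sum_mult (l1 ++ l2) = (sum_mult l1 + sum_mult l2)%nat.
Proof. induction l1 as [|p l IH]; simpl; [reflexivity|]. rewrite IH; lia. Qed.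

Lemma sub_sum (l : list (Cx * nat)) : forall l',
  NoDup (map fst l) ->
  (forall p, In p l -> exists m', In (fst p, m') l' /\ (snd p <= m')%nat) ->
  (sum_mult l <= sum_mult l')%nat.
Proof.
  induction l as [|p l IH]; intros l' ND H; simpl; [lia|].
  destruct (H p (or_introl eq_refl)) as [m' [Hin Hle]].
  apply in_split in Hin. destruct Hin as [la [lb Heq]]. subst l'.
  inversion ND as [|x y Hnot ND']; subst.
  assert (IH' : (sum_mult l <= sum_mult (la ++ lb))%nat).
  { apply IH; auto. intros q Hq. destruct (H q (or_intror Hq)) as [m'' [Hin' Hle']].
    exists m''. split; auto. apply in_app_or in Hin'. apply in_or_app.
    destruct Hin' as [|[E|]]; auto. exfalso. apply Hnot. injection E; intros _ E'.
    rewrite E'. apply in_map; auto. }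
  rewrite sum_mult_app in *. simpl. lia.
Qed.

Lemma n_nat (f : Cx -> Cx) (n : R -> R) : zero_counting f n ->
  forall r, 0 <= r -> exists k : nat, n r = INR k.
Proof. intros Z r Hr. destruct (Z r Hr) as [l [_ [_ [_ E]]]]. eauto. Qed.

Lemma n_nonneg (f : Cx -> Cx) (n : R -> R) : zero_counting f n ->
  forall r, 0 <= r -> 0 <= n r.
Proof. intros Z r Hr. destruct (n_nat f n Z r Hr) as [k ->]. apply pos_INR. Qed.

Lemma n_mono (f : Cx -> Cx) (n : R -> R) : zero_counting f n ->
  forall r r', 0 <= r -> r <= r' -> n r <= n r'.
Proof.
  intros Z r r' Hr Hrr.
  destruct (Z r Hr) as [l [ND [Hz [Hm E]]]].
  destruct (Z r' ltac:(lra)) as [l' [ND' [Hz' [Hm' E']]]].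
  rewrite E, E'. apply le_INR. apply sub_sum; auto.
  intros p Hp. assert (Hf : In (fst p) (map fst l)) by (apply in_map; auto).
  apply Hz in Hf. destruct Hf as [Hf1 Hf2].
  assert (Hf' : In (fst p) (map fst l')) by (apply Hz'; split; auto; lra).
  apply in_map_iff in Hf'. destruct Hf' as [q [Eq Hq]].
  exists (snd q). split.
  - rewrite <- Eq. destruct q; auto.
  - apply (mult_le f (fst p)); auto. rewrite <- Eq. auto.
Qed.

Fixpoint sumlen (l : list (R * R)) : R :=
  match l with nil => 0 | cons iv l' => (snd iv - fst iv) + sumlen l' end.

Lemma sumlen_app l1 l2 : sumlen (l1 ++ l2) = sumlen l1 + sumlen l2.
Proof. induction l1; simpl; [ring|]. rewrite IHl1; ring. Qed.

Lemma sumlen_nonneg l : (forall iv, In iv l -> fst iv <= snd iv) -> 0 <= sumlen l.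
Proof.
  induction l as [|iv l IH]; simpl; intros H; [lra|].
  pose proof (H iv (or_introl eq_refl)). assert (0 <= sumlen l) by (apply IH; auto). lra.
Qed.

Lemma fin_cover : forall n (l : list (R*R)), (length l <= n)%nat ->
  (forall iv, In iv l -> fst iv <= snd iv) -> forall p q, p <= q ->
  (forall x, p <= x <= q -> exists iv, In iv l /\ fst iv < x < snd iv) ->
  q - p <= sumlen l.
Proof.
  induction n as [|n IH]; intros l Hlen Hwf p q Hpq Hcov.
  - destruct l; [|simpl in Hlen; lia].
    destruct (Hcov q ltac:(lra)) as [iv [[] _]].
  - destruct (Hcov q ltac:(lra)) as [[al be] [Hin [H1 H2]]]. simpl in H1, H2.
    apply in_split in Hin. destruct Hin as [l1 [l2 ->]].
    rewrite sumlen_app. simpl.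
    assert (W1 : 0 <= sumlen l1) by (apply sumlen_nonneg; intros; apply Hwf; apply in_or_app; auto).
    assert (W2 : 0 <= sumlen l2) by (apply sumlen_nonneg; intros; apply Hwf; apply in_or_app; simpl; auto).
    destruct (Rlt_le_dec al p) as [Hap|Hpa].
    + lra.
    + assert (IHa : al - p <= sumlen (l1 ++ l2)).
      { apply (IH (l1 ++ l2)).
        - rewrite length_app in *. simpl in Hlen. lia.
        - intros iv Hiv. apply Hwf. apply in_app_or in Hiv. apply in_or_app. simpl. tauto.
        - lra.
        - intros x Hx. destruct (Hcov x ltac:(lra)) as [iv [Hiv Hx']].
          exists iv. split; auto. apply in_app_or in Hiv. apply in_or_app.
          destruct Hiv as [|[E|]]; auto. subst iv. simpl in Hx'. lra. }
      rewrite sumlen_app in IHa. lra.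
Qed.

Lemma creep (p q : R) (C : nat -> R -> Prop) :
  p <= q -> (forall N N' y, (N <= N')%nat -> C N y -> C N' y) ->
  (forall x, p <= x <= q -> exists N d, 0 < d /\ forall y, x - d < y < x + d -> C N y) ->
  exists N, forall y, p <= y <= q -> C N y.
Proof.
  intros Hpq Hmon Hloc.
  set (E := fun x => p <= x <= q /\ exists N, forall y, p <= y <= x -> C N y).
  assert (Ep : E p).
  { split; [lra|]. destruct (Hloc p ltac:(lra)) as [N [d [Hd H]]].
    exists N. intros y Hy. apply H. lra. }
  assert (Eb : bound E) by (exists q; intros x [Hx _]; lra).
  destruct (completeness E Eb (ex_intro _ p Ep)) as [s [Hub Hlub]].
  assert (Hps : p <= s) by (apply Hub; auto).
  assert (Hsq : s <= q) by (apply Hlub; intros x [Hx _]; lra).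
  destruct (Hloc s ltac:(lra)) as [N0 [d [Hd Hs]]].
  assert (Hx : exists x, E x /\ s - d < x).
  { apply NNPP; intro Hn.
    assert (s <= s - d); [|lra].
    apply Hlub. intros x Ex. apply Rnot_lt_le. intro Hlt. apply Hn; eauto. }
  destruct Hx as [x [[Hx1 [N1 HN1]] Hxs]].
  assert (Hz : forall z, p <= z <= q -> z <= s + d/2 -> E z).
  { intros z Hz Hzs. split; [lra|]. exists (Nat.max N0 N1). intros y Hy.
    destruct (Rle_dec y x).
    - apply (Hmon N1); [lia|]. apply HN1; lra.
    - apply (Hmon N0); [lia|]. apply Hs. split; [|lra].
      assert (x <= s) by (apply Hub; split; [lra|eauto]). lra. }
  destruct (Rle_dec q (s + d/2)).
  - destruct (Hz q ltac:(lra) ltac:(lra)) as [_ [N HN]]. exists N. exact HN.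
  - assert (Ez : E (s + d/2)) by (apply Hz; lra).
    assert (s + d/2 <= s) by (apply Hub; auto). lra.
Qed.

Fixpoint psum (F : nat -> R) (N : nat) : R :=
  match N with O => 0 | S N' => psum F N' + F N' end.

Lemma psum_sum F N : psum F (S N) = sum_f_R0 F N.
Proof. induction N; simpl in *; [ring|]. rewrite <- IHN. ring. Qed.

Lemma psum_mono F N j : (forall k, 0 <= F k) -> psum F N <= psum F (N + j).
Proof.
  intros HF. induction j; [rewrite Nat.add_0_r; lra|].
  rewrite Nat.add_succ_r. simpl. pose proof (HF (N + j)%nat). lra.
Qed.

Lemma psum_le_lim F L : (forall k, 0 <= F k) -> infinite_sum F L -> forall N, psum F N <= L.
Proof.
  intros HF Hs N. apply Rnot_lt_le. intro Hlt.
  destruct (Hs (psum F N - L) ltac:(lra)) as [N0 HN0].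
  specialize (HN0 (Nat.max N0 N) ltac:(lia)). rewrite <- psum_sum in HN0.
  assert (psum F N <= psum F (S (Nat.max N0 N))).
  { replace (S (Nat.max N0 N)) with (N + (S (Nat.max N0 N) - N))%nat by lia. apply psum_mono; auto. }
  unfold Rdist in HN0. rewrite Rabs_right in HN0; lra.
Qed.

Lemma psum_plus F G N : psum (fun k => F k + G k) N = psum F N + psum G N.
Proof. induction N; simpl; [ring|]. rewrite IHN; ring. Qed.

Lemma psum_ext F G N : (forall k, F k = G k) -> psum F N = psum G N.
Proof. intros H; induction N; simpl; [auto|]. rewrite IHN, H; auto. Qed.

Lemma psum_scal c F N : psum (fun k => c * F k) N = c * psum F N.
Proof. induction N; simpl; [ring|]. rewrite IHN; ring. Qed.

Lemma psum_geom N : psum (fun k => (/2) ^ k) N = 2 - 2 * (/2) ^ N.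
Proof. induction N; simpl; [field|]. rewrite IHN. field. Qed.

Lemma sumlen_seq (al be : nat -> R) N :
  sumlen (map (fun k => (al k, be k)) (seq 0 N)) = psum (fun k => be k - al k) N.
Proof.
  induction N; [reflexivity|]. rewrite seq_S, map_app, sumlen_app, IHN. simpl. ring.
Qed.

Lemma sumlen_enl (ls : list (R*R)) eta :
  sumlen (map (fun iv => (fst iv - eta, snd iv + eta)) ls) = sumlen ls + 2 * eta * INR (length ls).
Proof.
  induction ls as [|iv ls IH]; [simpl; ring|]. cbn [map sumlen length]. rewrite IH, S_INR. simpl. ring.
Qed.

Lemma cover_len p q (ls : list (R*R)) (a b : nat -> R) L :
  p <= q -> (forall iv, In iv ls -> fst iv <= snd iv) -> (forall k, a k <= b k) ->
  infinite_sum (fun k => b k - a k) L ->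
  (forall x, p <= x <= q -> (exists iv, In iv ls /\ fst iv <= x <= snd iv) \/ (exists k, a k <= x <= b k)) ->
  q - p <= sumlen ls + L.
Proof.
  intros Hpq Hwf Hab Hs Hcov. apply Rle_plus_epsilon. intros eps Heps.
  set (eta := eps / (4 * (INR (length ls) + 1))).
  assert (Heta : 0 < eta) by (unfold eta; apply Rdiv_lt_0_compat; [lra|]; pose proof (pos_INR (length ls)); lra).
  set (e := fun k => eps / 8 * (/2) ^ k).
  assert (He : forall k, 0 < e k) by (intro k; unfold e; apply Rmult_lt_0_compat; [lra|apply pow_lt; lra]).
  set (lsE := map (fun iv => (fst iv - eta, snd iv + eta)) ls).
  set (sq := fun N => map (fun k => (a k - e k, b k + e k)) (seq 0 N)).
  set (C := fun N y => exists iv, In iv (lsE ++ sq N) /\ fst iv < y < snd iv).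
  destruct (creep p q C Hpq) as [N HN].
  - intros N N' y HNN [iv [Hin Hy]]. exists iv. split; auto.
    apply in_app_or in Hin. apply in_or_app. destruct Hin as [|Hin]; [auto|right].
    unfold sq in *. apply in_map_iff in Hin. destruct Hin as [k [Ek Hk]].
    apply in_seq in Hk. apply in_map_iff. exists k. split; auto. apply in_seq. lia.
  - intros x Hx. destruct (Hcov x Hx) as [[iv [Hin Hiv]]|[k Hk]].
    + exists O, eta. split; auto. intros y Hy. exists (fst iv - eta, snd iv + eta).
      split; [apply in_or_app; left; unfold lsE; apply in_map_iff; eauto|]. simpl. lra.
    + exists (S k), (e k). split; auto. intros y Hy. exists (a k - e k, b k + e k).
      split; [|simpl; lra]. apply in_or_app; right. unfold sq. apply in_map_iff.
      exists k. split; auto. apply in_seq. lia.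
  - assert (Hf : q - p <= sumlen (lsE ++ sq N)).
    { apply (fin_cover (length (lsE ++ sq N))); auto.
      intros iv Hiv. apply in_app_or in Hiv. destruct Hiv as [Hiv|Hiv].
      + unfold lsE in Hiv. apply in_map_iff in Hiv. destruct Hiv as [iv' [<- Hiv']].
        simpl. pose proof (Hwf iv' Hiv'). lra.
      + unfold sq in Hiv. apply in_map_iff in Hiv. destruct Hiv as [k [<- _]].
        simpl. pose proof (Hab k). pose proof (He k). lra. }
    rewrite sumlen_app in Hf. unfold lsE, sq in Hf. rewrite sumlen_enl, sumlen_seq in Hf.
    rewrite (psum_ext _ (fun k => (b k - a k) + eps / 4 * (/2) ^ k)) in Hf
      by (intro k; unfold e; field).
    rewrite psum_plus in Hf.
    assert (P1 : psum (fun k => b k - a k) N <= L) by (apply psum_le_lim; auto; intro k; pose proof (Hab k); lra).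
    assert (P2 : psum (fun k => eps / 4 * (/ 2) ^ k) N <= eps / 2).
    { rewrite psum_scal, psum_geom. pose proof (pow_lt (/2) N ltac:(lra)). nra. }
    assert (P3 : 2 * eta * INR (length ls) <= eps / 2).
    { pose proof (pos_INR (length ls)).
      replace (2 * eta * INR (length ls)) with (eps / 2 * (INR (length ls) / (INR (length ls) + 1)))
        by (unfold eta; field; lra).
      assert (INR (length ls) / (INR (length ls) + 1) <= 1).
      { apply Rmult_le_reg_r with (INR (length ls) + 1); [lra|].
        unfold Rdiv; rewrite Rmult_assoc, Rinv_l; lra. }
      nra. }
    lra.
Qed.

Fixpoint cnt (b : nat -> R) (lo len : nat) : R :=
  match len with O => 0 | S l => b lo + cnt b (S lo) l end.

Lemma cnt_add b : forall x lo y, cnt b lo (x + y) = cnt b lo x + cnt b (lo + x) y.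
Proof.
  induction x as [|x IH]; intros lo y; simpl.
  - rewrite Nat.add_0_r; ring.
  - rewrite IH. replace (S lo + x)%nat with (lo + S x)%nat by lia. ring.
Qed.

Lemma cnt_le b : (forall j, 0 <= b j <= 1) -> forall len lo, 0 <= cnt b lo len <= INR len.
Proof.
  intros Hb len. induction len as [|len IH]; intro lo; simpl cnt; [simpl; lra|].
  rewrite S_INR. destruct (IH (S lo)). destruct (Hb lo). lra.
Qed.

Lemma maxR (phi b : nat -> R) rho M : 0 < rho -> (forall j, 0 <= b j <= 1) ->
  (forall j, (j < M)%nat -> phi j <= phi (S j)) ->
  (forall j, (j < M)%nat -> b j <> 0 -> exists k, (j <= k < M)%nat /\
       rho * (INR k + 1 - INR j) < phi (S k) - phi j) ->
  rho * cnt b 0 M <= phi M - phi O.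
Proof.
  intros Hr Hb Hphi Hw.
  assert (G : forall len lo, (lo + len = M)%nat -> rho * cnt b lo len <= phi M - phi lo).
  { intro len. induction len as [len IH] using (well_founded_induction lt_wf).
    intros lo Hl. destruct len as [|len'].
    - simpl. replace lo with M by lia. lra.
    - destruct (Req_dec (b lo) 0) as [E|E].
      + simpl cnt. rewrite E. specialize (IH len' ltac:(lia) (S lo) ltac:(lia)).
        pose proof (Hphi lo ltac:(lia)). lra.
      + destruct (Hw lo ltac:(lia) E) as [k [Hk Hlt]].
        replace (S len') with ((S k - lo) + (M - S k))%nat by lia.
        rewrite cnt_add. replace (lo + (S k - lo))%nat with (S k) by lia.
        specialize (IH (M - S k)%nat ltac:(lia) (S k) ltac:(lia)).
        destruct (cnt_le b Hb (S k - lo) lo) as [_ C1].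
        rewrite minus_INR, S_INR in C1 by lia.
        assert (rho * cnt b lo (S k - lo) <= rho * (INR k + 1 - INR lo)) by (apply Rmult_le_compat_l; lra).
        lra. }
  apply (G M O). lia.
Qed.

Lemma maxL (phi b : nat -> R) rho M : 0 < rho -> (forall j, 0 <= b j <= 1) ->
  (forall j, (j < M)%nat -> phi j <= phi (S j)) ->
  (forall j, (j < M)%nat -> b j <> 0 -> exists k, (k <= j)%nat /\
       rho * (INR j + 1 - INR k) < phi (S j) - phi k) ->
  rho * cnt b 0 M <= phi M - phi O.
Proof.
  intros Hr Hb Hphi Hw.
  assert (G : forall hi, (hi <= M)%nat -> rho * cnt b 0 hi <= phi hi - phi O).
  { intro hi. induction hi as [hi IH] using (well_founded_induction lt_wf).
    intros Hh. destruct hi as [|j].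
    - simpl. lra.
    - destruct (Req_dec (b j) 0) as [E|E].
      + replace (S j) with (j + 1)%nat by lia. rewrite cnt_add. simpl cnt.
        rewrite E. specialize (IH j ltac:(lia) ltac:(lia)).
        pose proof (Hphi j ltac:(lia)). replace (j+1)%nat with (S j) by lia. lra.
      + destruct (Hw j ltac:(lia) E) as [k [Hk Hlt]].
        replace (S j) with (k + (S j - k))%nat by lia.
        rewrite cnt_add. replace (k + (S j - k))%nat with (S j) by lia.
        rewrite Nat.add_0_l.
        specialize (IH k ltac:(lia) ltac:(lia)).
        destruct (cnt_le b Hb (S j - k) k) as [_ C1].
        rewrite minus_INR, S_INR in C1 by lia.
        assert (rho * cnt b k (S j - k) <= rho * (INR j + 1 - INR k)) by (apply Rmult_le_compat_l; lra).
        lra. }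
  apply G; lia.
Qed.

Lemma find_cell (x : nat -> R) : forall hi lo t, (lo < hi)%nat -> x lo <= t <= x hi ->
  exists k, (lo <= k < hi)%nat /\ x k <= t <= x (S k).
Proof.
  induction hi as [|h IH]; intros lo t Hl Ht; [lia|].
  destruct (Nat.eq_dec lo h) as [->|Hne].
  - exists h; split; [lia|lra].
  - destruct (Rle_dec t (x h)).
    + destruct (IH lo t ltac:(lia) ltac:(lra)) as [k [Hk Hk']]. exists k; split; [lia|auto].
    + exists h; split; [lia|lra].
Qed.


Lemma nat_unbounded (X : R) : exists k : nat, X < INR k.
Proof.
  destruct (archimed X) as [H1 _].
  destruct (Z_lt_le_dec (up X) 0) as [Hn|Hp].
  - exists O. simpl. apply IZR_lt in Hn. lra.
  - exists (Z.to_nat (up X)). rewrite INR_IZR_INZ, Z2Nat.id by lia. lra.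
Qed.

Lemma pow2_gt (j : nat) : INR j < 2 ^ j.
Proof.
  induction j; [simpl; lra|]. rewrite S_INR. simpl pow. pose proof (pow_R1_Rle 2 j ltac:(lra)). lra.
Qed.

Lemma bern (m : nat) (x : R) : 0 <= x -> 1 + INR m * x <= (1 + x) ^ m.
Proof.
  intros Hx. destruct (Req_dec x 0) as [->|Hne].
  - rewrite Rplus_0_r, pow1. lra.
  - apply poly. lra.
Qed.

Lemma pow_inv_mul (t r : R) (m : nat) : 0 < t -> 0 < r -> (t / r) ^ m * (r / t) ^ m = 1.
Proof.
  intros Ht Hr. rewrite <- Rpow_mult_distr.
  replace (t / r * (r / t)) with 1 by (field; lra). apply pow1.
Qed.


Lemma Dbl (n : R -> R) (r0 K : R) (nu : nat) :
  0 < r0 -> 1 < K -> K <= 2 ^ nu ->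
  (forall r, 0 <= r -> 0 <= n r) ->
  (forall r r', 0 <= r -> r <= r' -> n r <= n r') ->
  (forall r, r0 <= r -> n (2 * r) <= K * n r) ->
  forall r t, r0 <= r -> r <= t -> n t <= K * (t / r) ^ nu * n r.
Proof.
  intros Hr0 HK Hnu Hnn Hmono Hd r t Hr Hrt.
  assert (G : forall j t, r <= t <= 2 ^ j * r -> n t <= K * (t / r) ^ nu * n r).
  { induction j as [|j IH]; intros t' Ht'.
    - simpl in Ht'. replace t' with r by lra. replace (r / r) with 1 by (field; lra).
      rewrite pow1. pose proof (Hnn r ltac:(lra)). nra.
    - assert (Hy : 1 <= (t' / r) ^ nu).
      { apply pow_R1_Rle. apply Rmult_le_reg_r with r; [lra|]. unfold Rdiv.
        rewrite Rmult_assoc, Rinv_l; lra. }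
      pose proof (Hnn r ltac:(lra)).
      destruct (Rle_dec t' (2 * r)).
      + apply Rle_trans with (n (2 * r)); [apply Hmono; lra|].
        apply Rle_trans with (K * n r); [apply Hd; lra|].
        assert (0 <= K * n r * ((t' / r) ^ nu - 1)) by (apply Rmult_le_pos; [apply Rmult_le_pos|]; lra). nra.
      + simpl in Ht'.
        assert (IH' := IH (t'/2) ltac:(split; lra)).
        replace t' with (2 * (t'/2)) by field.
        apply Rle_trans with (K * n (t'/2)); [apply Hd; lra|].
        replace ((2 * (t'/2)) / r) with (2 * (t'/2/r)) by (field; lra).
        rewrite Rpow_mult_distr.
        assert (H2 : 0 < 2 ^ nu) by (apply pow_lt; lra).
        assert (H3 : 0 <= (t'/2/r)^nu) by (apply pow_le; apply Rmult_le_pos; [lra|]; left; apply Rinv_0_lt_compat; lra).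
        assert (H4 : 0 <= n r) by auto.
        apply Rle_trans with (K * (K * (t' / 2 / r) ^ nu * n r)); [apply Rmult_le_compat_l; lra|].
        assert (K * ((t' / 2 / r) ^ nu * n r) <= 2 ^ nu * ((t' / 2 / r) ^ nu * n r)) by (apply Rmult_le_compat_r; nra).
        nra. }
  destruct (nat_unbounded (t / r)) as [j Hj].
  apply (G j). split; auto. pose proof (pow2_gt j).
  assert (t / r * r = t) by (field; lra).
  assert (t / r <= 2 ^ j) by lra.
  apply Rmult_le_compat_r with (r := r) in H1; lra.
Qed.

Lemma far_pow (y K : R) (nu m : nat) : 2 <= y -> K <= 2 ^ nu -> (2 * nu <= m)%nat ->
  K * y ^ nu <= y ^ m.
Proof.
  intros Hy HK Hm.
  apply Rle_trans with (y ^ (nu + nu)).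
  - rewrite pow_add. assert (2 ^ nu <= y ^ nu) by (apply pow_incr; lra).
    assert (0 < y ^ nu) by (apply pow_lt; lra). nra.
  - apply Rle_pow; [lra|lia].
Qed.

Lemma good_of_near (n : R -> R) (r0 K : R) (nu m : nat) (R0 r : R) :
  0 < r0 -> 1 < K -> K <= 2 ^ nu -> (2 * nu <= m)%nat ->
  (forall r, 0 <= r -> 0 <= n r) ->
  (forall r r', 0 <= r -> r <= r' -> n r <= n r') ->
  (forall r, r0 <= r -> n (2 * r) <= K * n r) ->
  2 * r0 <= R0 -> R0 <= r <= 2 * R0 ->
  (forall t, r <= t <= 2 * r -> n t <= (t / r) ^ m * n r) ->
  (forall t, r / 2 <= t <= r -> (t / r) ^ m * n r <= n t) ->
  F_set n r0 (INR m) r.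
Proof.
  intros Hr0 HK Hnu Hm Hnn Hmono Hd HR Hr NR NL.
  split; [lra|split].
  - intros t Ht. rewrite Rpower_pow by (apply Rdiv_lt_0_compat; lra).
    destruct (Rle_dec t (2 * r)); [apply NR; lra|].
    pose proof (Dbl n r0 K nu Hr0 HK Hnu Hnn Hmono Hd r t ltac:(lra) ltac:(lra)).
    assert (2 <= t / r).
    { apply Rmult_le_reg_r with r; [lra|]. unfold Rdiv. rewrite Rmult_assoc, Rinv_l; lra. }
    pose proof (far_pow (t/r) K nu m H0 Hnu Hm). pose proof (Hnn r ltac:(lra)).
    assert (K * (t / r) ^ nu * n r <= (t / r) ^ m * n r) by (apply Rmult_le_compat_r; lra).
    lra.
  - intros t Ht. rewrite Rpower_pow by (apply Rdiv_lt_0_compat; lra).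
    destruct (Rle_dec (r / 2) t); [apply NL; lra|].
    pose proof (Dbl n r0 K nu Hr0 HK Hnu Hnn Hmono Hd t r ltac:(lra) ltac:(lra)).
    assert (2 <= r / t).
    { apply Rmult_le_reg_r with t; [lra|]. unfold Rdiv. rewrite Rmult_assoc, Rinv_l; lra. }
    pose proof (far_pow (r/t) K nu m H0 Hnu Hm). pose proof (Hnn t ltac:(lra)).
    pose proof (pow_inv_mul t r m ltac:(lra) ltac:(lra)).
    assert (0 <= (t / r) ^ m) by (apply pow_le; apply Rmult_le_pos; [lra|left; apply Rinv_0_lt_compat; lra]).
    apply Rle_trans with ((t / r) ^ m * (K * (r / t) ^ nu * n t)); [apply Rmult_le_compat_l; lra|].
    apply Rle_trans with ((t / r) ^ m * ((r / t) ^ m * n t)).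
    + apply Rmult_le_compat_l; [lra|]. apply Rmult_le_compat_r; lra.
    + rewrite <- Rmult_assoc, H3. lra.
Qed.

Lemma nearR (n : R -> R) (K A R0 lam r t : R) (m : nat) :
  1 < K -> 0 < R0 -> 0 < r -> r <= 2 * R0 -> 0 <= A -> A <= n r ->
  lam = INR m * A / (4 * K * R0) -> r <= t ->
  n t - n r <= lam * (t - r) -> n t <= (t / r) ^ m * n r.
Proof.
  intros HK HR Hr Hr2 HA HAn Hl Ht H.
  pose proof (bern m (t / r - 1) ltac:(apply Rge_le, Rge_minus, Rle_ge;
    apply Rmult_le_reg_r with r; [lra|]; unfold Rdiv; rewrite Rmult_assoc, Rinv_l; lra)) as B.
  replace (1 + (t / r - 1)) with (t / r) in B by ring.
  pose proof (pos_INR m) as Hm.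
  assert (Hlam : lam <= INR m * n r / r).
  { rewrite Hl. unfold Rdiv. apply Rmult_le_reg_r with (4 * K * R0 * r); [repeat apply Rmult_lt_0_compat; lra|].
    replace (INR m * A * / (4 * K * R0) * (4 * K * R0 * r)) with (INR m * A * r) by (field; lra).
    replace (INR m * n r * / r * (4 * K * R0 * r)) with (INR m * n r * (4 * K * R0)) by (field; lra).
    assert (A * r <= n r * r) by (apply Rmult_le_compat_r; lra).
    assert (n r * r <= n r * (4 * K * R0)) by (apply Rmult_le_compat_l; nra).
    rewrite !Rmult_assoc. apply Rmult_le_compat_l; lra. }
  assert (E : INR m * n r / r * (t - r) = INR m * (t / r - 1) * n r) by (field; lra).
  assert (lam * (t - r) <= INR m * n r / r * (t - r)) by (apply Rmult_le_compat_r; lra).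
  assert ((1 + INR m * (t / r - 1)) * n r <= (t / r) ^ m * n r) by (apply Rmult_le_compat_r; lra).
  nra.
Qed.

Lemma nearL (n : R -> R) (K A R0 lam r t : R) (m : nat) :
  1 < K -> 0 < R0 -> 0 < t -> t <= r -> t <= 2 * R0 -> 0 <= A -> A / K <= n t ->
  lam = INR m * A / (4 * K * R0) ->
  n r - n t <= lam * (r - t) -> (t / r) ^ m * n r <= n t.
Proof.
  intros HK HR Ht Htr Ht2 HA HAn Hl H.
  pose proof (bern m (r / t - 1) ltac:(apply Rge_le, Rge_minus, Rle_ge;
    apply Rmult_le_reg_r with t; [lra|]; unfold Rdiv; rewrite Rmult_assoc, Rinv_l; lra)) as B.
  replace (1 + (r / t - 1)) with (r / t) in B by ring.
  pose proof (pos_INR m) as Hm.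
  assert (HnA : 0 <= n t) by (apply Rle_trans with (A / K); [unfold Rdiv; apply Rmult_le_pos; [lra|left; apply Rinv_0_lt_compat; lra]|auto]).
  assert (Hlam : lam <= INR m * n t / t).
  { rewrite Hl. unfold Rdiv. apply Rmult_le_reg_r with (4 * K * R0 * t); [repeat apply Rmult_lt_0_compat; lra|].
    replace (INR m * A * / (4 * K * R0) * (4 * K * R0 * t)) with (INR m * A * t) by (field; lra).
    replace (INR m * n t * / t * (4 * K * R0 * t)) with (INR m * (n t * K) * (4 * R0)) by (field; lra).
    assert (A <= n t * K).
    { apply Rmult_le_reg_r with (/ K); [apply Rinv_0_lt_compat; lra|].
      replace (n t * K * / K) with (n t) by (field; lra). exact HAn. }
    assert (A * t <= n t * K * t) by (apply Rmult_le_compat_r; lra).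
    assert (n t * K * t <= n t * K * (4 * R0)) by (apply Rmult_le_compat_l; nra).
    replace (INR m * (n t * K) * (4 * R0)) with (INR m * (n t * K * (4 * R0))) by ring.
    rewrite Rmult_assoc. apply Rmult_le_compat_l; lra. }
  assert (E : INR m * n t / t * (r - t) = INR m * (r / t - 1) * n t) by (field; lra).
  assert (lam * (r - t) <= INR m * n t / t * (r - t)) by (apply Rmult_le_compat_r; lra).
  assert (Hle : n r <= (r / t) ^ m * n t).
  { assert ((1 + INR m * (r / t - 1)) * n t <= (r / t) ^ m * n t) by (apply Rmult_le_compat_r; lra).
    nra. }
  pose proof (pow_inv_mul t r m Ht ltac:(lra)) as PI.
  assert (0 <= (t / r) ^ m) by (apply pow_le; apply Rmult_le_pos; [lra|left; apply Rinv_0_lt_compat; lra]).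
  apply Rle_trans with ((t / r) ^ m * ((r / t) ^ m * n t)); [apply Rmult_le_compat_l; lra|].
  rewrite <- Rmult_assoc, PI. lra.
Qed.

Lemma sumlen_cells (x : nat -> R) (h : R) (b : nat -> R) : forall len lo,
  sumlen (map (fun j => (x j, x j + h * b j)) (seq lo len)) = h * cnt b lo len.
Proof.
  induction len as [|len IH]; intros lo; simpl; [ring|]. rewrite IH. ring.
Qed.

Lemma int_gap (u v : R) : (exists p, u = INR p) -> (exists q, v = INR q) -> u - v < 1 -> u <= v.
Proof.
  intros [p ->] [q ->] H. destruct (le_lt_dec p q) as [Hle|Hlt].
  - apply le_INR; auto.
  - apply le_INR in Hlt. rewrite S_INR in Hlt. lra.
Qed.

Theorem lemma4 (f : Cx -> Cx) (n : R -> R) (r0 K : R) :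
  entire f -> finite_order f -> zero_counting f n ->
  0 < r0 -> 1 < K ->
  (forall r, r0 <= r -> n (2 * r) <= K * n r) ->
  forall delta, 0 < delta ->
  exists mu, 0 < mu /\
    forall R, 2 * r0 <= R ->
      meas_ge (fun r => F_set n r0 mu r /\ R <= r <= 2 * R) ((1 - delta) * R).
Proof.
  intros _ _ Z Hr0 HK Hd delta Hdel.
  pose proof (n_nonneg f n Z) as Hnn.
  pose proof (n_mono f n Z) as Hmono.
  pose proof (n_nat f n Z) as Hnat.
  destruct (nat_unbounded K) as [nu Hnu0].
  assert (Hnu : K <= 2 ^ nu) by (pose proof (pow2_gt nu); lra).
  destruct (nat_unbounded (24 * K ^ 3 / delta + 2 * INR nu)) as [m Hm0].
  assert (HK3 : 0 < K ^ 3) by (apply pow_lt; lra).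
  assert (Hq : 0 <= 24 * K ^ 3 / delta) by (unfold Rdiv; apply Rmult_le_pos; [lra|left; apply Rinv_0_lt_compat; lra]).
  pose proof (pos_INR nu) as Hnu1.
  assert (Hm2 : (2 * nu <= m)%nat).
  { apply INR_le. rewrite mult_INR. simpl (INR 2). lra. }
  assert (Hmpos : 0 < INR m) by lra.
  assert (Hmbig : 24 * K ^ 3 <= delta * INR m).
  { assert (24 * K ^ 3 / delta <= INR m) by lra.
    apply Rmult_le_compat_l with (r := delta) in H; [|lra].
    replace (delta * (24 * K ^ 3 / delta)) with (24 * K ^ 3) in H by (field; lra). exact H. }
  exists (INR m). split; [exact Hmpos|].
  intros RR HRR a b Hab Hcov L HL.
  assert (HRp : 0 < RR) by lra.
  set (A := n RR).
  assert (HA : 0 <= A) by (apply Hnn; lra).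
  assert (H4R : n (4 * RR) <= K * K * A).
  { replace (4 * RR) with (2 * (2 * RR)) by ring.
    apply Rle_trans with (K * n (2 * RR)); [apply Hd; lra|].
    rewrite Rmult_assoc. apply Rmult_le_compat_l; [lra|]. apply Hd; lra. }
  assert (HR2 : A <= K * n (RR / 2)).
  { unfold A. replace RR with (2 * (RR / 2)) at 1 by field. apply Hd; lra. }
  destruct (Rle_lt_or_eq_dec 0 A HA) as [Apos|A0].
  2:{ (* A = 0: every point is good *)
    assert (Z0 : forall t, 0 <= t <= 4 * RR -> n t = 0).
    { intros t Ht. pose proof (Hnn t ltac:(lra)). pose proof (Hmono t (4 * RR) ltac:(lra) ltac:(lra)).
      rewrite <- A0 in H4R. lra. }
    assert (Hc := cover_len RR (2 * RR) nil a b L ltac:(lra) ltac:(simpl; tauto) Hab HL).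
    simpl sumlen in Hc.
    assert (2 * RR - RR <= 0 + L); [|nra].
    apply Hc. intros x Hx. right. apply Hcov. split; [|lra].
    apply (good_of_near n r0 K nu m RR x); auto; try lra.
    - intros t Ht. rewrite (Z0 t), (Z0 x) by lra. lra.
    - intros t Ht. rewrite (Z0 t), (Z0 x) by lra. lra. }
  set (lam := INR m * A / (4 * K * RR)).
  assert (Hlam : 0 < lam) by (unfold lam; apply Rdiv_lt_0_compat; [nra|]; repeat apply Rmult_lt_0_compat; lra).
  destruct (nat_unbounded (7 * RR * lam / 2 + 1)) as [M HM0].
  assert (HMpos : 0 < INR M).
  { assert (0 <= 7 * RR * lam / 2) by (unfold Rdiv; apply Rmult_le_pos; [nra|lra]). lra. }
  assert (HM1 : (0 < M)%nat) by (destruct M; [simpl in HMpos; lra|lia]).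
  set (h := 7 * RR / (2 * INR M)).
  assert (Hh : 0 < h) by (unfold h; apply Rdiv_lt_0_compat; lra).
  assert (Hlh : lam * h <= 1).
  { unfold h. replace (lam * (7 * RR / (2 * INR M))) with ((7 * RR * lam / 2) / INR M) by (field; lra).
    apply Rmult_le_reg_r with (INR M); [lra|]. unfold Rdiv at 1. rewrite Rmult_assoc, Rinv_l; lra. }
  set (x := fun j : nat => RR / 2 + INR j * h).
  assert (Hx0 : x O = RR / 2) by (unfold x; simpl; ring).
  assert (HxM : x M = 4 * RR) by (unfold x, h; field; lra).
  assert (HxS : forall j, x (S j) = x j + h) by (intro j; unfold x; rewrite S_INR; ring).
  assert (Hxpos : forall j, 0 <= x j) by (intro j; unfold x; pose proof (pos_INR j); nra).
  set (rho := lam * h / 3).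
  assert (Hrho : 0 < rho) by (unfold rho; nra).
  set (phi := fun j => n (x j)).
  assert (Hphi : forall j, (j < M)%nat -> phi j <= phi (S j)).
  { intros j _. unfold phi. apply Hmono; auto. rewrite HxS; lra. }
  assert (Hphint : forall j, exists p, phi j = INR p) by (intro j; apply Hnat; auto).
  set (badR := fun j => exists k, (j <= k < M)%nat /\ rho * (INR k + 1 - INR j) < phi (S k) - phi j).
  set (badL := fun j => exists k, (k <= j)%nat /\ rho * (INR j + 1 - INR k) < phi (S j) - phi k).
  set (bR := fun j => if excluded_middle_informative (badR j) then 1 else 0).
  set (bL := fun j => if excluded_middle_informative (badL j) then 1 else 0).
  assert (HbR : forall j, 0 <= bR j <= 1) by (intro j; unfold bR; destruct excluded_middle_informative; lra).
  assert (HbL : forall j, 0 <= bL j <= 1) by (intro j; unfold bL; destruct excluded_middle_informative; lra).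
  assert (HbR1 : forall j, bR j <> 0 -> badR j /\ bR j = 1)
    by (intro j; unfold bR; destruct excluded_middle_informative; [auto|lra]).
  assert (HbL1 : forall j, bL j <> 0 -> badL j /\ bL j = 1)
    by (intro j; unfold bL; destruct excluded_middle_informative; [auto|lra]).
  assert (HbR0 : forall j, bR j = 0 -> ~ badR j)
    by (intro j; unfold bR; destruct excluded_middle_informative; [lra|auto]).
  assert (HbL0 : forall j, bL j = 0 -> ~ badL j)
    by (intro j; unfold bL; destruct excluded_middle_informative; [lra|auto]).
  assert (CR : rho * cnt bR 0 M <= phi M - phi O).
  { apply maxR; auto. intros j Hj Hne. apply (HbR1 j Hne). }
  assert (CL : rho * cnt bL 0 M <= phi M - phi O).
  { apply maxL; auto. intros j Hj Hne. apply (HbL1 j Hne). }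
  assert (Hphi0 : 0 <= phi O) by (unfold phi; auto).
  assert (HphiM : phi M <= K * K * A) by (unfold phi; rewrite HxM; auto).
  set (ls := map (fun j => (x j, x j + h * bR j)) (seq 0 M) ++ map (fun j => (x j, x j + h * bL j)) (seq 0 M)).
  assert (Hsum : sumlen ls = h * cnt bR 0 M + h * cnt bL 0 M) by (unfold ls; rewrite sumlen_app, !sumlen_cells; ring).
  assert (Hc : 2 * RR - RR <= sumlen ls + L).
  { apply (cover_len RR (2 * RR) ls a b L); auto; [lra| |].
    - intros iv Hiv. unfold ls in Hiv. apply in_app_or in Hiv.
      destruct Hiv as [Hiv|Hiv]; apply in_map_iff in Hiv; destruct Hiv as [j [<- _]]; simpl.
      + pose proof (HbR j); nra.
      + pose proof (HbL j); nra.
    - intros r Hr.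
      destruct (find_cell x M O r HM1 ltac:(rewrite Hx0, HxM; lra)) as [j [Hj [Hj1 Hj2]]].
      rewrite HxS in Hj2.
      destruct (Req_dec (bR j) 0) as [ER|ER].
      2:{ left. exists (x j, x j + h * bR j). split.
          - unfold ls. apply in_or_app; left. apply in_map_iff. exists j. split; auto. apply in_seq; lia.
          - simpl. destruct (HbR1 j ER) as [_ ->]. lra. }
      destruct (Req_dec (bL j) 0) as [EL|EL].
      2:{ left. exists (x j, x j + h * bL j). split.
          - unfold ls. apply in_or_app; right. apply in_map_iff. exists j. split; auto. apply in_seq; lia.
          - simpl. destruct (HbL1 j EL) as [_ ->]. lra. }
      right. apply Hcov. split; [|lra].
      pose proof (HbR0 j ER) as NBR. pose proof (HbL0 j EL) as NBL.
      assert (HAr : A <= n r) by (apply Hmono; lra).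
      apply (good_of_near n r0 K nu m RR r); auto; try lra.
      + intros t Ht. apply (nearR n K A RR lam r t m); auto; try lra.
        destruct (find_cell x M j t (proj2 Hj) ltac:(rewrite HxM; lra)) as [k [Hk [Hk1 Hk2]]].
        assert (P1 : n t <= phi (S k)) by (unfold phi; apply Hmono; lra).
        assert (P2 : phi j <= n r) by (unfold phi; apply Hmono; auto; lra).
        assert (P3 : phi (S k) - phi j <= rho * (INR k + 1 - INR j)).
        { apply Rnot_lt_le. intro Hlt. apply NBR. exists k. split; auto. }
        destruct (le_lt_dec (j + 2) k) as [Hkj|Hkj].
        * assert (Hkj' : INR j + 2 <= INR k) by (pose proof (le_INR _ _ Hkj) as HH; rewrite plus_INR in HH; simpl in HH; lra).
          assert (Ht' : (INR k - INR j - 1) * h <= t - r).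
          { unfold x in Hk1, Hj2. nra. }
          assert (rho * (INR k + 1 - INR j) <= lam * ((INR k - INR j - 1) * h)).
          { unfold rho. assert (0 <= lam * h * (2 * (INR k - INR j) - 4)) by (apply Rmult_le_pos; nra). nra. }
          assert (lam * ((INR k - INR j - 1) * h) <= lam * (t - r)) by (apply Rmult_le_compat_l; lra).
          lra.
        * assert (Hkj' : INR k <= INR j + 1) by (assert (HH : (k <= S j)%nat) by lia; apply le_INR in HH; rewrite S_INR in HH; lra).
          assert (Hkj2 : INR j <= INR k) by (apply le_INR; lia).
          assert (phi (S k) <= phi j).
          { apply int_gap; auto. assert (rho * (INR k + 1 - INR j) <= 2 * rho) by nra.
            unfold rho in *. lra. }
          nra.
      + intros t Ht. apply (nearL n K A RR lam r t m); auto; try lra.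
        * apply Rmult_le_reg_r with K; [lra|]. unfold Rdiv. rewrite Rmult_assoc, Rinv_l by lra.
          rewrite Rmult_1_r. apply Rle_trans with (K * n (RR / 2)); [exact HR2|].
          rewrite Rmult_comm. apply Rmult_le_compat_r; [lra|]. apply Hmono; lra.
        * destruct (find_cell x (S j) O t ltac:(lia) ltac:(rewrite Hx0, HxS; lra)) as [k [Hk [Hk1 Hk2]]].
          assert (P1 : phi k <= n t) by (unfold phi; apply Hmono; auto).
          assert (P2 : n r <= phi (S j)) by (unfold phi; apply Hmono; [lra|rewrite HxS; lra]).
          assert (P3 : phi (S j) - phi k <= rho * (INR j + 1 - INR k)).
          { apply Rnot_lt_le. intro Hlt. apply NBL. exists k. split; [lia|auto]. }
          destruct (le_lt_dec (k + 2) j) as [Hkj|Hkj].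
          -- assert (Hkj' : INR k + 2 <= INR j) by (pose proof (le_INR _ _ Hkj) as HH; rewrite plus_INR in HH; simpl in HH; lra).
             assert (Ht' : (INR j - INR k - 1) * h <= r - t).
             { rewrite HxS in Hk2. unfold x in Hk2, Hj1. nra. }
             assert (rho * (INR j + 1 - INR k) <= lam * ((INR j - INR k - 1) * h)).
             { unfold rho. assert (0 <= lam * h * (2 * (INR j - INR k) - 4)) by (apply Rmult_le_pos; nra). nra. }
             assert (lam * ((INR j - INR k - 1) * h) <= lam * (r - t)) by (apply Rmult_le_compat_l; lra).
             lra.
          -- assert (Hkj' : INR j <= INR k + 1) by (assert (HH : (j <= S k)%nat) by lia; apply le_INR in HH; rewrite S_INR in HH; lra).
             assert (Hkj2 : INR k <= INR j) by (apply le_INR; lia).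
             assert (phi (S j) <= phi k).
             { apply int_gap; auto. assert (rho * (INR j + 1 - INR k) <= 2 * rho) by nra.
               unfold rho in *. lra. }
             nra. }
  rewrite Hsum in Hc.
  assert (B1 : h * cnt bR 0 M <= 3 * K * K * A / lam).
  { replace (h * cnt bR 0 M) with (3 * (rho * cnt bR 0 M) / lam) by (unfold rho; field; lra).
    unfold Rdiv. apply Rmult_le_compat_r; [left; apply Rinv_0_lt_compat; lra|]. lra. }
  assert (B2 : h * cnt bL 0 M <= 3 * K * K * A / lam).
  { replace (h * cnt bL 0 M) with (3 * (rho * cnt bL 0 M) / lam) by (unfold rho; field; lra).
    unfold Rdiv. apply Rmult_le_compat_r; [left; apply Rinv_0_lt_compat; lra|]. lra. }
  assert (B3 : 3 * K * K * A / lam = 12 * K ^ 3 * RR / INR m) by (unfold lam; field; repeat split; lra).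
  assert (B4 : 24 * K ^ 3 * RR / INR m <= delta * RR).
  { apply Rmult_le_reg_r with (INR m); [lra|].
    replace (24 * K ^ 3 * RR / INR m * INR m) with (24 * K ^ 3 * RR) by (field; lra).
    nra. }
  assert (B5 : 12 * K ^ 3 * RR / INR m + 12 * K ^ 3 * RR / INR m = 24 * K ^ 3 * RR / INR m) by (field; lra).
  lra.
Qed.
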